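(* Let $X$ be a mild $\mathcal M$-set and $f\in\mathcal M$. Then the map $X\to X$, $x\mapsto f.x$, is injective.
   Context: $\omega=\{1,2,3,\dots\}$, $\mathcal M$ the monoid of injections $\omega\to\omega$; an $\mathcal M$-set is a set with left $\mathcal M$-action. For $A\subset\omega$, $\mathcal M_A$ is the submonoid of injections fixing $A$ elementwise, and $x$ is supported on $A$ if $g.x=x$ for all $g\in\mathcal M_A$. An $\mathcal M$-set $X$ is mild if every $x\in X$ is supported on some co-infinite set $A\subset\omega$ (i.e.\ $\omega\setminus A$ infinite). *)

(* Defs.v *)
From Stdlib Require Import Arith.
Set Implicit Arguments.

(* omega = {1,2,3,...}; we index it by nat via n |-> n+1 (an order-preserving
   bijection); all notions below are invariant under this relabelling. *)
Definition omega := nat.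

Record Inj := mkInj { inj_fun :> omega -> omega ;
                      inj_prop : forall a b, inj_fun a = inj_fun b -> a = b }.

Definition inj_id : Inj := @mkInj (fun n => n) (fun a b h => h).
Definition inj_comp (f g : Inj) : Inj.
Proof.
  refine (@mkInj (fun n => f (g n)) _).
  intros a b h. apply (inj_prop g), (inj_prop f), h.
Defined.

Record MSet := {
  carrier :> Type ;
  act : Inj -> carrier -> carrier ;
  act_id : forall x, act inj_id x = x ;
  act_comp : forall (f g : Inj) x, act (inj_comp f g) x = act f (act g x)
}.

Definition fixes (A : omega -> Prop) (g : Inj) : Prop := forall a, A a -> g a = a.

Definition supported_on (X : MSet) (A : omega -> Prop) (x : X) : Prop :=
  forall g : Inj, fixes A g -> act X g x = x.

Definition coinfinite (A : omega -> Prop) : Prop :=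
  forall n : omega, exists m, n <= m /\ ~ A m.

Definition mild (X : MSet) : Prop :=
  forall x : X, exists A : omega -> Prop, coinfinite A /\ supported_on X A x.

(* Main.v *)
Require Import Defs.
From Stdlib Require Import Arith Lia Classical ClassicalEpsilon FunctionalExtensionality ProofIrrelevance.

Lemma Inj_ext (f g : Inj) : (forall n, f n = g n) -> f = g.
Proof.
  destruct f as [f hf], g as [g hg]; simpl; intro H.
  assert (f = g) by (apply functional_extensionality; auto). subst g.
  f_equal. apply proof_irrelevance.
Qed.

Definition pick (T : nat -> Prop) (HT : forall n, exists m, n <= m /\ T m) (n : nat) : nat :=
  proj1_sig (constructive_indefinite_description _ (HT n)).

Lemma pick_spec T HT n : n <= pick T HT n /\ T (pick T HT n).
Proof. unfold pick. destruct (constructive_indefinite_description _ _) as [m Hm]; exact Hm. Qed.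

Fixpoint enum T HT (k : nat) : nat :=
  match k with 0 => pick T HT 0 | S k => pick T HT (S (enum T HT k)) end.

Lemma enum_T T HT k : T (enum T HT k).
Proof. destruct k; simpl; apply pick_spec. Qed.

Lemma enum_lt T HT k : enum T HT k < enum T HT (S k).
Proof. simpl. pose proof (pick_spec T HT (S (enum T HT k))). lia. Qed.

Lemma enum_mono T HT i j : i < j -> enum T HT i < enum T HT j.
Proof.
  induction j; intro H; [lia|].
  pose proof (enum_lt T HT j).
  destruct (Nat.eq_dec i j); [subst; auto|]. assert (i < j) by lia. specialize (IHj H1). lia.
Qed.

Lemma enum_inj T HT i j : enum T HT i = enum T HT j -> i = j.
Proof.
  intro H. destruct (lt_eq_lt_dec i j) as [[h|h]|h]; auto.
  - pose proof (enum_mono T HT _ _ h). lia.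
  - pose proof (enum_mono T HT _ _ h). lia.
Qed.

Lemma ext_inv (k : Inj) (S T : nat -> Prop) (HT : forall n, exists m, n <= m /\ T m)
  (HST : forall n, S n -> ~ T n) : exists g : Inj, forall n, S n -> g (k n) = n.
Proof.
  set (gf := fun m => match excluded_middle_informative (exists n, S n /\ k n = m) with
     | left H => proj1_sig (constructive_indefinite_description _ H)
     | right _ => enum T HT m end).
  assert (Hspec : forall m, (exists n, S n /\ k n = m /\ gf m = n) \/
                            ((~ exists n, S n /\ k n = m) /\ gf m = enum T HT m)).
  { intro m. unfold gf. destruct (excluded_middle_informative _) as [H|H].
    - left. destruct (constructive_indefinite_description _ H) as [n [h1 h2]]. simpl.
      exists n. auto.
    - right. auto. }
  assert (Hinj : forall a b, gf a = gf b -> a = b).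
  { intros a b Hab.
    destruct (Hspec a) as [[n1 [s1 [k1 g1]]]|[n1 g1]];
    destruct (Hspec b) as [[n2 [s2 [k2 g2]]]|[n2 g2]].
    - subst. congruence.
    - exfalso. apply (HST n1 s1). rewrite <- g1, Hab, g2. apply enum_T.
    - exfalso. apply (HST n2 s2). rewrite <- g2, <- Hab, g1. apply enum_T.
    - apply (enum_inj T HT). congruence. }
  exists (mkInj gf Hinj). intros n Hn. simpl.
  destruct (Hspec (k n)) as [[n1 [s1 [k1 g1]]]|[n1 g1]].
  - apply inj_prop in k1. congruence.
  - exfalso. apply n1. exists n. auto.
Qed.

Lemma transport (X : MSet) (A : nat -> Prop) (x : X) (p : Inj) :
  supported_on X A x ->
  supported_on X (fun m => (exists a, A a /\ p a = m) \/ ~ (exists n, p n = m)) (act X p x).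
Proof.
  intros Hx g Hg.
  assert (Hr : forall n, exists n', p n' = g (p n)).
  { intro n. apply NNPP. intro Hn.
    assert (H : g (g (p n)) = g (p n)) by (apply Hg; right; exact Hn).
    apply inj_prop in H. apply Hn. exists n. congruence. }
  set (sf := fun n => proj1_sig (constructive_indefinite_description _ (Hr n))).
  assert (Hsf : forall n, p (sf n) = g (p n)).
  { intro n. unfold sf. destruct (constructive_indefinite_description _ _) as [m Hm]. exact Hm. }
  assert (Hsi : forall a b, sf a = sf b -> a = b).
  { intros a b H. apply (inj_prop p), (inj_prop g). rewrite <- !Hsf. congruence. }
  set (s := mkInj sf Hsi).
  assert (Hs : fixes A s).
  { intros a Ha. simpl. apply (inj_prop p). rewrite Hsf. apply Hg. left. exists a. auto. }
  rewrite <- act_comp.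
  replace (inj_comp g p) with (inj_comp p s).
  - rewrite act_comp, (Hx s Hs). reflexivity.
  - apply Inj_ext. intro n. simpl. apply Hsf.
Qed.

Lemma direct (X : MSet) (f : Inj) (A B : nat -> Prop) (x y : X) :
  supported_on X A x -> supported_on X B y ->
  (forall n, exists m, n <= m /\ ~ (A m \/ B m)) -> act X f x = act X f y -> x = y.
Proof.
  intros Hx Hy Hc Hf.
  destruct (ext_inv f (fun n => A n \/ B n) (fun m => ~(A m \/ B m)) Hc) as [g Hg].
  { intros n H1 H2; auto. }
  assert (H1 : fixes A (inj_comp g f)) by (intros a Ha; simpl; apply Hg; auto).
  assert (H2 : fixes B (inj_comp g f)) by (intros a Ha; simpl; apply Hg; auto).
  transitivity (act X (inj_comp g f) x); [symmetry; apply Hx; exact H1|].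
  transitivity (act X (inj_comp g f) y); [|apply Hy; exact H2].
  rewrite !act_comp, Hf. reflexivity.
Qed.

Theorem lemma1p12 (X : MSet) (hX : mild X) (f : Inj) :
  forall x y : X, act X f x = act X f y -> x = y.
Proof.
  intros x y Hf.
  destruct (hX x) as [A [HA Hx]]. destruct (hX y) as [B [HB Hy]].
  destruct (classic (forall n, exists m, n <= m /\ ~(A m \/ B m))) as [Hc|Hc].
  - exact (direct X f A B x y Hx Hy Hc Hf).
  - assert (HCB : forall n, exists m, n <= m /\ ~ A m /\ B m).
    { apply not_all_ex_not in Hc. destruct Hc as [N HN]. intro n.
      destruct (HA (max n N)) as [m [Hm1 Hm2]]. exists m. split; [lia|split; auto].
      apply NNPP; intro HB'. apply HN. exists m. split; [lia|tauto]. }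
    destruct (ext_inv f B (fun m => ~ B m) HB) as [g' Hg']. { auto. }
    set (p := inj_comp g' f).
    assert (Hyp : act X p x = y).
    { unfold p. rewrite act_comp, Hf, <- act_comp. apply Hy. intros b Hb; simpl; auto. }
    pose proof (transport X A x p Hx) as Hy'. rewrite Hyp in Hy'.
    apply (direct X f A _ x y Hx Hy'); [|exact Hf].
    intro n. destruct (HCB n) as [m [H1 [H2 H3]]]. exists m. split; auto.
    assert (Hpm : p m = m) by (unfold p; simpl; auto).
    intros [H|[[a [Ha Hpa]]|H]].
    + auto.
    + rewrite <- Hpm in Hpa. apply inj_prop in Hpa. subst. auto.
    + apply H. exists m. exact Hpm.
Qed.
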